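(* Let $f\in L^1((0,\infty))$ and define, for $x>0$, $$\mathcal{H}f(x)=\frac{1}{x}\int_0^x f(t)\,dt-\frac{1}{1+x}\int_0^\infty f(t)\,dt.$$ If $$\int_0^\infty |f(t)|\left[\ln\left(1+\frac{1}{t}\right)+\ln(1+t)\right]dt<\infty,$$ then $\mathcal{H}f\in L^1((0,\infty))$. Conversely, if $f\in L^1((0,\infty))$ is non-negative and $\mathcal{H}f\in L^1((0,\infty))$, then $\int_0^\infty f(t)\left[\ln\left(1+\frac{1}{t}\right)+\ln(1+t)\right]dt<\infty$.
   Context: $L^1((0,\infty))$ denotes the space of measurable functions $f$ on $(0,\infty)$ with $\int_0^\infty |f(x)|\,dx<\infty$. *)

(* Defs.v *)
From mathcomp Require Import all_boot all_order all_algebra.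
From mathcomp Require Import all_classical all_reals all_analysis.
Import Order.TTheory GRing.Theory Num.Theory.
Local Open Scope classical_set_scope.
Local Open Scope ring_scope.

Definition pos_dom (R : realType) : set R := `]0, +oo[%classic.

Definition L1pos (R : realType) (f : R -> R) : Prop :=
  (@lebesgue_measure R).-integrable (pos_dom R) (EFin \o f).

Definition hardy_op (R : realType) (f : R -> R) (x : R) : R :=
  x^-1 * Rintegral (@lebesgue_measure R) `]0, x]%classic f
  - (1 + x)^-1 * Rintegral (@lebesgue_measure R) (pos_dom R) f.

Definition log_weight (R : realType) (t : R) : R :=
  ln (1 + t^-1) + ln (1 + t).

Arguments L1pos {R} f.
Arguments hardy_op {R} f x.
Arguments log_weight {R} t.

(* Main.v *)
Require Import Defs.
From mathcomp Require Import all_boot all_order all_algebra.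
From mathcomp Require Import all_classical all_reals all_analysis.
From mathcomp Require Import ring lra.
From mathcomp Require Import measurable_realfun.
Import Order.TTheory GRing.Theory Num.Theory.
Local Open Scope classical_set_scope.
Import numFieldNormedType.Exports.
Local Open Scope ring_scope.

Section aux.
Context {R : realType}.
Notation mu := (@lebesgue_measure R).

Lemma cvg_inv_y : (fun x : R => x^-1) x @[x --> +oo] --> 0.
Proof.
apply/(@cvgrVy R R (nbhs +oo) _ (fun x : R => x^-1)).
  by near=> x; rewrite invr_gt0; near: x; exact: nbhs_pinfty_gt.
apply: cvg_trans (cvg_id); apply: near_eq_cvg; near=> x => /=.
by rewrite /unstable.inv_fun invrK.
Unshelve. all: by end_near. Qed.


Lemma ln1D_derive (x : R) : -1 < x -> is_derive x 1 (fun y => ln (1 + y)) (1 + x)^-1.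
Proof.
move=> x1.
have h1 : 0 < 1 + x by rewrite -ltrBlDl sub0r.
have := @is_derive1_comp R (@ln R) (fun y => 1 + y) x (1 + x)^-1 1 (is_derive1_ln h1).
rewrite mulr1; apply.
have := is_deriveD (is_derive_cst (1:R) x 1) (is_derive_id x (1:R)).
by rewrite add0r.
Qed.

Lemma ln1D_cont (x : R) : -1 < x -> {for x, continuous (fun y : R => ln (1 + y))}.
Proof.
move=> x1.
have h1 : 0 < 1 + x by rewrite -ltrBlDl sub0r.
apply: continuous_comp; last exact: continuous_ln.
by apply: continuousD; [exact: cvg_cst | exact: cvg_id].
Qed.

Lemma int_a (t : R) : 0 < t ->
  (\int[mu]_(x in `[t, +oo[) ((x * (1 + x))^-1)%:E = (ln (1 + t^-1))%:E)%E.
Proof.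
move=> t0.
pose F (x : R) := ln x - ln (1 + x).
have Fd (x : R) : 0 < x -> is_derive x 1 F (x * (1 + x))^-1.
  move=> x0.
  have -> : (x * (1 + x))^-1 = x^-1 - (1 + x)^-1.
    have x1 : 1 + x != 0 by rewrite gt_eqF// ltr_wpDl.
    by field; rewrite x1 gt_eqF.
  apply: is_deriveB; first exact: is_derive1_ln.
  by apply: ln1D_derive; rewrite (lt_trans _ x0)// ltrN10.
have Ft : F t = - ln (1 + t^-1).
  have -> : 1 + t^-1 = (1 + t) / t by field; rewrite gt_eqF.
  have t1 : 0 < 1 + t by lra.
  by rewrite /F ln_div ?posrE// opprB.
rewrite (@ge0_continuous_FTC2y R (fun x => (x * (1 + x))^-1) F t 0).
- by rewrite Ft sub0e EFinN oppeK.
- move=> x tx; rewrite invr_ge0 mulr_ge0 ?addr_ge0//; exact: le_trans (ltW t0) tx.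
- apply: continuous_in_subspaceT => x; rewrite inE/= in_itv/= andbT => tx.
  have x0 : 0 < x by exact: lt_le_trans tx.
  apply: (@continuousV _ _ (fun y : R => y * (1 + y))); first by rewrite mulf_neq0 ?gt_eqF ?ltr_wpDl// ltW.
  apply: continuousM; first exact: cvg_id.
  by apply: continuousD; [exact: cvg_cst | exact: cvg_id].
- have : (fun x => - ln (1 + x^-1)) x @[x --> +oo] --> (0:R).
    have L : (fun x => ln (1 + x^-1)) x @[x --> +oo] --> (ln 1 : R).
      apply: (cvg_comp (fun x => 1 + x^-1) (@ln R)); last first.
        by apply: continuous_ln.
      have := cvgD (cvg_cst (1:R)) (@cvg_inv_y).
      by rewrite addr0; apply.
    by have := cvgN L; rewrite ln1 oppr0; apply; exact: _.
  apply: cvg_trans; apply: near_eq_cvg; near=> x.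
  have x0 : 0 < x by near: x; exact: nbhs_pinfty_gt.
  rewrite /F.
  have -> : 1 + x^-1 = (1 + x) / x by field; rewrite gt_eqF.
  have x1 : 0 < 1 + x by lra.
  by rewrite ln_div ?posrE// opprB.
- move=> x tx; apply: ex_derive; apply: Fd; exact: lt_trans tx.
- apply: cvg_at_right_filter.
  apply: continuousB; first exact: continuous_ln.
  by apply: ln1D_cont; rewrite (lt_trans _ t0)// ltrN10.
- move=> x; rewrite in_itv/= andbT => tx.
  by rewrite derive1E; apply: derive_val; apply: Fd; exact: lt_trans tx.
Unshelve. all: by end_near. Qed.


Lemma measurable_inv : measurable_fun setT (@GRing.inv R).
Proof.
rewrite (_ : setT = [set 0] `|` [set x : R | x != 0]); last first.
  apply/seteqP; split => x //= _; have [->|] := eqVneq x 0; [by left|by right].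
apply/measurable_funU => //.
  by apply: open_measurable; exact: open_neq.
split; first exact: measurable_fun_set1.
apply: open_continuous_measurable_fun; first exact: open_neq.
by move=> x; rewrite inE /= => x0; exact: inv_continuous.
Qed.

Lemma int_b (t : R) : 0 < t ->
  (\int[mu]_(x in `]0%R, t[) ((1 + x)^-1)%:E = (ln (1 + t))%:E)%E.
Proof.
move=> t0.
have mf : measurable_fun setT (fun x : R => (1 + x)^-1).
  apply: measurableT_comp; first exact: measurable_inv.
  by apply: measurable_funD => //; exact: measurable_cst.
rewrite integral_itv_obnd_cbnd; last first.
  by apply/measurable_EFinP; exact: measurable_funS mf.
rewrite integral_itv_bndo_bndc; last first.
  by apply/measurable_EFinP; exact: measurable_funS mf.
rewrite (@continuous_FTC2 R (fun x => (1 + x)^-1) (fun x => ln (1 + x)) 0 t t0).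
- by rewrite addr0 ln1 sube0.
- apply: continuous_in_subspaceT => x; rewrite inE/= in_itv/= => /andP[x0 _].
  apply: (@continuousV _ _ (fun y : R => 1 + y)); first by rewrite gt_eqF//; lra.
  by apply: continuousD; [exact: cvg_cst | exact: cvg_id].
- split.
  + move=> x; rewrite in_itv/= => /andP[x0 _].
    by apply: ex_derive; apply: ln1D_derive; lra.
  + by apply: cvg_at_right_filter; apply: ln1D_cont; lra.
  + by apply: cvg_at_left_filter; apply: ln1D_cont; lra.
- move=> x; rewrite in_itv/= => /andP[x0 _].
  by rewrite derive1E; apply: derive_val; apply: ln1D_derive; lra.
Qed.


Local Open Scope ereal_scope.

Lemma mphi (P : R -> R -> bool) (h a : R -> \bar R) :
  measurable_fun setT (fun z : R * R => P z.1 z.2) ->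
  measurable_fun setT h -> measurable_fun setT a ->
  measurable_fun setT (fun z : R * R => if P z.1 z.2 then h z.2 * a z.1 else 0).
Proof.
move=> mP mh ma.
apply: (@measurable_fun_ifT _ _ _ _ (fun z : R * R => h z.2 * a z.1) (fun _ => 0)
  (fun z : R * R => P z.1 z.2)) => //.
apply: emeasurable_funM.
  exact: measurableT_comp mh measurable_snd.
exact: measurableT_comp ma measurable_fst.
Qed.

Lemma intZr_if (Q : R -> bool) (h : R -> \bar R) (c : \bar R) :
  measurable_fun setT Q -> measurable_fun setT h -> (forall t, 0 <= h t) -> 0 <= c ->
  \int[mu]_t (if Q t then h t * c else 0) = (\int[mu]_t (if Q t then h t else 0)) * c.
Proof.
move=> mQ mh h0 c0.
rewrite -ge0_integralZr//; last by move=> t _; case: ifP.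
  by apply: eq_integral => t _; case: ifP => //; rewrite mul0e.
exact: (@measurable_fun_ifT _ _ _ _ h (fun _ => 0) Q).
Qed.

Lemma intZl_if (Q : R -> bool) (h : R -> \bar R) (c : \bar R) :
  measurable_fun setT Q -> measurable_fun setT h -> (forall t, 0 <= h t) -> 0 <= c ->
  \int[mu]_t (if Q t then c * h t else 0) = c * (\int[mu]_t (if Q t then h t else 0)).
Proof.
move=> mQ mh h0 c0.
rewrite -ge0_integralZl//; last by move=> t _; case: ifP.
  by apply: eq_integral => t _; case: ifP => //; rewrite mule0.
exact: (@measurable_fun_ifT _ _ _ _ h (fun _ => 0) Q).
Qed.

Lemma tonelli_gen (P : R -> R -> bool) (h a : R -> \bar R) :
  measurable_fun setT (fun z : R * R => P z.1 z.2) ->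
  measurable_fun setT h -> measurable_fun setT a ->
  (forall t, 0 <= h t) -> (forall x, 0 <= a x) ->
  \int[mu]_x ((\int[mu]_t (if P x t then h t else 0)) * a x) =
  \int[mu]_t (h t * \int[mu]_x (if P x t then a x else 0)).
Proof.
move=> mP mh ma h0 a0.
pose phi := fun z : R * R => if P z.1 z.2 then h z.2 * a z.1 else 0.
have phi0 : forall z : R * R, 0 <= phi z.
  by move=> z; rewrite /phi; case: ifP => // _; exact: mule_ge0.
have E := @fubini_tonelli _ _ _ _ R mu mu phi (@mphi P h a mP mh ma) phi0.
have mP2 x : measurable_fun setT (fun y => P x y).
  exact: (measurable_fun_pair2 x mP).
have mP1 y : measurable_fun setT (fun x => P x y).
  exact: (measurable_fun_pair1 y mP).
transitivity (\int[mu]_x \int[mu]_y phi (x, y)).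
  apply: eq_integral => x _.
  by rewrite -intZr_if.
rewrite E.
apply: eq_integral => t _.
by rewrite -intZl_if.
Qed.

Lemma meas_sect (P : R -> R -> bool) (h : R -> \bar R) :
  measurable_fun setT (fun z : R * R => P z.1 z.2) ->
  measurable_fun setT h -> (forall t, 0 <= h t) ->
  measurable_fun setT (fun x => \int[mu]_t (if P x t then h t else 0)).
Proof.
move=> mP mh h0.
pose phi := fun z : R * R => if P z.1 z.2 then h z.2 else 0.
have mphi : measurable_fun setT phi.
  apply: (@measurable_fun_ifT _ _ _ _ (fun z : R * R => h z.2) (fun _ => 0)
    (fun z : R * R => P z.1 z.2)) => //.
  exact: measurableT_comp mh measurable_snd.
have phi0 : forall z, 0 <= phi z by move=> z; rewrite /phi; case: ifP.
exact: (@measurable_fun_fubini_tonelli_F _ _ _ _ R mu phi mphi phi0).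
Qed.

Lemma int_if_set (Q : R -> bool) (S : set R) (g : R -> \bar R) :
  (forall x, Q x = (x \in S)) ->
  \int[mu]_x (if Q x then g x else 0) = \int[mu]_(x in S) g x.
Proof.
by move=> HQ; rewrite [RHS]integral_mkcond; apply: eq_integral => x _; rewrite /patch HQ.
Qed.

Definition PA (x t : R) := (0 < t)%R && (t <= x)%R.
Definition PB (x t : R) := (0 < x)%R && (x < t)%R.
Definition aA (x : R) : \bar R := (`|(x * (1 + x))^-1|)%:E.
Definition aB (x : R) : \bar R := (`|(1 + x)^-1|)%:E.

Lemma mPA : measurable_fun setT (fun z : R * R => PA z.1 z.2).
Proof.
apply: measurable_and.
  exact: measurable_fun_ltr (measurable_cst _) measurable_snd.
exact: measurable_fun_ler measurable_snd measurable_fst.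
Qed.

Lemma mPB : measurable_fun setT (fun z : R * R => PB z.1 z.2).
Proof.
apply: measurable_and.
  exact: measurable_fun_ltr (measurable_cst _) measurable_fst.
exact: measurable_fun_ltr measurable_fst measurable_snd.
Qed.

Lemma mPA' : measurable_fun setT (fun z : R * R => PA z.2 z.1).
Proof.
apply: measurable_and.
  exact: measurable_fun_ltr (measurable_cst _) measurable_fst.
exact: measurable_fun_ler measurable_fst measurable_snd.
Qed.

Lemma mPB' : measurable_fun setT (fun z : R * R => PB z.2 z.1).
Proof.
apply: measurable_and.
  exact: measurable_fun_ltr (measurable_cst _) measurable_snd.
exact: measurable_fun_ltr measurable_snd measurable_fst.
Qed.

Lemma maA : measurable_fun setT aA.
Proof.
apply/measurable_EFinP; apply: measurableT_comp => //.
apply: measurableT_comp; first exact: measurable_inv.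
apply: measurable_funM => //.
by apply: measurable_funD => //; exact: measurable_cst.
Qed.

Lemma maB : measurable_fun setT aB.
Proof.
apply/measurable_EFinP; apply: measurableT_comp => //.
apply: measurableT_comp; first exact: measurable_inv.
by apply: measurable_funD => //; exact: measurable_cst.
Qed.

Lemma aA_ge0 x : 0 <= aA x. Proof. by rewrite lee_fin. Qed.
Lemma aB_ge0 x : 0 <= aB x. Proof. by rewrite lee_fin. Qed.

Lemma IA_eq (t : R) : (0 < t)%R ->
  \int[mu]_x (if PA x t then aA x else 0) = (ln (1 + t^-1))%:E.
Proof.
move=> t0; rewrite (@int_if_set _ `[t, +oo[%classic).
  rewrite -int_a//; apply: eq_integral => x; rewrite inE/= in_itv/= andbT => tx.
  by rewrite /aA ger0_norm// invr_ge0 mulr_ge0//; lra.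
by move=> x; rewrite /PA t0 /= mem_setE in_itv /= andbT.
Qed.

Lemma IB_eq (t : R) : (0 < t)%R ->
  \int[mu]_x (if PB x t then aB x else 0) = (ln (1 + t))%:E.
Proof.
move=> t0; rewrite (@int_if_set _ `]0%R, t[%classic).
  rewrite -int_b//; apply: eq_integral => x; rewrite inE/= in_itv/= => /andP[x0 _].
  by rewrite /aB ger0_norm// invr_ge0; lra.
by move=> x; rewrite /PB mem_setE in_itv /=.
Qed.

Definition hF (f : R -> R) (t : R) : \bar R := if (0 < t)%R then (`|f t|)%:E else 0.

Lemma measurable_D : measurable (pos_dom R).
Proof. exact: measurable_itv. Qed.
#[local] Hint Resolve measurable_D : core.

Lemma memD (t : R) : (t \in pos_dom R) = (0 < t)%R.
Proof. by rewrite /pos_dom mem_setE in_itv /= andbT. Qed.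

Lemma mhF (f : R -> R) : measurable_fun (pos_dom R) (EFin \o f) ->
  measurable_fun setT (hF f).
Proof.
move=> mf.
have : measurable_fun (pos_dom R) (fun t => (`|f t|)%:E).
  by apply/measurable_EFinP; apply: measurableT_comp => //; apply/measurable_EFinP.
move/(measurable_restrictT _ (measurable_itv _)).
apply: eq_measurable_fun => t _.
by rewrite /patch /hF memD.
Qed.

Lemma hF_ge0 f t : 0 <= hF f t.
Proof. by rewrite /hF; case: ifP. Qed.

Lemma core (f : R -> R) : measurable_fun (pos_dom R) (EFin \o f) ->
  \int[mu]_(t in pos_dom R) (`|f t| * log_weight t)%:E =
  \int[mu]_x ((\int[mu]_t (if PA x t then hF f t else 0)) * aA x) +
  \int[mu]_x ((\int[mu]_t (if PB x t then hF f t else 0)) * aB x).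
Proof.
move=> mf.
rewrite (@tonelli_gen PA (hF f) aA mPA (@mhF f mf) maA (hF_ge0 f) aA_ge0).
rewrite (@tonelli_gen PB (hF f) aB mPB (@mhF f mf) maB (hF_ge0 f) aB_ge0).
rewrite -ge0_integralD//; last 4 first.
- by move=> t _; apply: mule_ge0; [exact: hF_ge0|apply: integral_ge0 => x _; case: ifP => // _; exact: aA_ge0].
- apply: emeasurable_funM; first exact: (@mhF f mf).
  exact: (@meas_sect (fun t x => PA x t) aA mPA' maA aA_ge0).
- by move=> t _; apply: mule_ge0; [exact: hF_ge0|apply: integral_ge0 => x _; case: ifP => // _; exact: aB_ge0].
- apply: emeasurable_funM; first exact: (@mhF f mf).
  exact: (@meas_sect (fun t x => PB x t) aB mPB' maB aB_ge0).
rewrite [LHS]integral_mkcond; apply: eq_integral => t _.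
rewrite /patch memD /hF; case: ifPn => t0.
  by rewrite IA_eq// IB_eq// -!EFinM -EFinD /log_weight mulrDr.
by rewrite !mul0e adde0.
Qed.

Definition hD (g : R -> R) (t : R) : \bar R := if (0 < t)%R then (g t)%:E else 0.

Lemma mhD (g : R -> R) : measurable_fun (pos_dom R) g -> measurable_fun setT (hD g).
Proof.
move=> mg.
have : measurable_fun (pos_dom R) (fun t => (g t)%:E) by apply/measurable_EFinP.
move/(measurable_restrictT _ (measurable_itv _)).
apply: eq_measurable_fun => t _.
by rewrite /patch /hD memD.
Qed.

Lemma hD_ge0 g t : (forall t, 0 <= g t)%R -> 0 <= hD g t.
Proof. by move=> g0; rewrite /hD; case: ifP => // _; rewrite lee_fin. Qed.

Lemma subD_oc (x : R) : `]0%R, x] `<=` pos_dom R.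
Proof. by move=> t /=; rewrite /pos_dom /= !in_itv /= andbT => /andP[]. Qed.

Lemma subD_oo (x : R) : (0 < x)%R -> `]x, +oo[ `<=` pos_dom R.
Proof. by move=> x0 t /=; rewrite /pos_dom /= !in_itv /= !andbT => /(lt_trans x0). Qed.

Lemma SA (g : R -> R) (x : R) : (0 < x)%R -> mu.-integrable (pos_dom R) (EFin \o g) ->
  \int[mu]_t (if PA x t then hD g t else 0) = (Rintegral mu `]0%R, x] g)%:E.
Proof.
move=> x0 ig.
rewrite (@int_if_set _ `]0%R, x]%classic); last by move=> t; rewrite /PA mem_setE in_itv.
transitivity (\int[mu]_(t in `]0%R, x]) (g t)%:E).
  by apply: eq_integral => t; rewrite inE /= in_itv /= => /andP[t0 _]; rewrite /hD t0.
rewrite /Rintegral fineK//; apply: integrable_fin_num => //.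
by apply: integrableS ig => //; exact: subD_oc.
Qed.

Lemma SB (g : R -> R) (x : R) : (0 < x)%R -> mu.-integrable (pos_dom R) (EFin \o g) ->
  \int[mu]_t (if PB x t then hD g t else 0) = (Rintegral mu `]x, +oo[ g)%:E.
Proof.
move=> x0 ig.
rewrite (@int_if_set _ `]x, +oo[%classic); last first.
  by move=> t; rewrite /PB x0 mem_setE in_itv /= andbT.
transitivity (\int[mu]_(t in `]x, +oo[) (g t)%:E).
  apply: eq_integral => t; rewrite inE /= in_itv /= andbT => xt.
  by rewrite /hD (lt_trans x0 xt).
rewrite /Rintegral fineK//; apply: integrable_fin_num => //.
by apply: integrableS ig => //; exact: subD_oo.
Qed.

Lemma Rsplit (g : R -> R) (x : R) : (0 < x)%R -> mu.-integrable (pos_dom R) (EFin \o g) ->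
  Rintegral mu (pos_dom R) g = (Rintegral mu `]0%R, x] g + Rintegral mu `]x, +oo[ g)%R.
Proof.
move=> x0 ig.
have E : pos_dom R = `]0%R, x] `|` `]x, +oo[.
  rewrite /pos_dom; apply: itv_bndbnd_setU; rewrite bnd_simp//; exact: ltW.
rewrite E Rintegral_setU//; first by rewrite -E.
apply/disj_setPS => t [] /=; rewrite !in_itv /= andbT => /andP[_ tx] xt.
by move: (le_lt_trans tx xt); rewrite ltxx.
Qed.

Lemma hardy_eq (f : R -> R) (x : R) : (0 < x)%R -> L1pos f ->
  hardy_op f x = (Rintegral mu `]0%R, x] f * (x * (1 + x))^-1
                 - Rintegral mu `]x, +oo[ f * (1 + x)^-1)%R.
Proof.
move=> x0 If; rewrite /hardy_op (Rsplit _ _ x0 If).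
have x1 : (1 + x != 0)%R by rewrite gt_eqF//; lra.
by field; rewrite x1 gt_eqF.
Qed.

Lemma normb (r : R) : (- `|r| <= r <= `|r|)%R.
Proof. by have := ler_norml r `|r|; rewrite lexx => /esym. Qed.

Definition fp (f : R -> R) t := ((`|f t| + f t) / 2)%R.
Definition fn (f : R -> R) t := ((`|f t| - f t) / 2)%R.

Lemma fp_ge0 f t : (0 <= fp f t)%R.
Proof. by have := normb (f t); rewrite /fp => /andP[? ?]; lra. Qed.
Lemma fn_ge0 f t : (0 <= fn f t)%R.
Proof. by have := normb (f t); rewrite /fn => /andP[? ?]; lra. Qed.

Lemma mfp f : measurable_fun (pos_dom R) f -> measurable_fun (pos_dom R) (fp f).
Proof.
move=> mf; apply: measurable_funM; last exact: measurable_cst.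
by apply: measurable_funD => //; exact: measurableT_comp.
Qed.
Lemma mfn f : measurable_fun (pos_dom R) f -> measurable_fun (pos_dom R) (fn f).
Proof.
move=> mf; apply: measurable_funM; last exact: measurable_cst.
by apply: measurable_funB => //; exact: measurableT_comp.
Qed.

Lemma ifp f : L1pos f -> mu.-integrable (pos_dom R) (EFin \o fp f).
Proof.
move=> If; have If' := If; apply: le_integrable If' => //.
  by apply/measurable_EFinP; apply: mfp; apply/measurable_EFinP; exact: (measurable_int _ If).
move=> t _; rewrite /= lee_fin ger0_norm ?fp_ge0//.
by have := normb (f t); rewrite /fp => /andP[? ?]; lra.
Qed.
Lemma ifn f : L1pos f -> mu.-integrable (pos_dom R) (EFin \o fn f).
Proof.
move=> If; have If' := If; apply: le_integrable If' => //.
  by apply/measurable_EFinP; apply: mfn; apply/measurable_EFinP; exact: (measurable_int _ If).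
move=> t _; rewrite /= lee_fin ger0_norm ?fn_ge0//.
by have := normb (f t); rewrite /fn => /andP[? ?]; lra.
Qed.

Lemma m_hardy (f : R -> R) : L1pos f -> measurable_fun (pos_dom R) (hardy_op f).
Proof.
move=> If.
have mf : measurable_fun (pos_dom R) f by apply/measurable_EFinP; exact: (measurable_int _ If).
pose SP x := \int[mu]_t (if PA x t then hD (fp f) t else 0).
pose SN x := \int[mu]_t (if PA x t then hD (fn f) t else 0).
have mSP : measurable_fun setT SP.
  exact: (@meas_sect PA (hD (fp f)) mPA (@mhD (fp f) (@mfp f mf)) (fun t => @hD_ge0 (fp f) t (fp_ge0 f))).
have mSN : measurable_fun setT SN.
  exact: (@meas_sect PA (hD (fn f)) mPA (@mhD (fn f) (@mfn f mf)) (fun t => @hD_ge0 (fn f) t (fn_ge0 f))).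
apply: (@eq_measurable_fun _ _ _ _ (pos_dom R) (fun x : R => x^-1 * (fine (SP x) - fine (SN x))
   - (1 + x)^-1 * Rintegral mu (pos_dom R) f)%R).
  move=> x; rewrite memD => x0.
  rewrite /SP /SN (SA _ _ x0 (ifp _ If)) (SA _ _ x0 (ifn _ If)) /= /hardy_op; congr (_ * _ - _)%R.
  rewrite -RintegralB//; last 2 first.
  - by apply: integrableS (ifp _ If) => //; exact: subD_oc.
  - by apply: integrableS (ifn _ If) => //; exact: subD_oc.
  by apply: eq_Rintegral => t _; rewrite /fp /fn; field.
apply: measurable_funB.
  apply: measurable_funM.
    exact: measurable_funTS measurable_inv.
  apply: measurable_funB.
    exact: measurable_funTS (measurableT_comp (fine_measurable measurableT) mSP).
  exact: measurable_funTS (measurableT_comp (fine_measurable measurableT) mSN).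
apply: measurable_funM; last exact: measurable_cst.
apply: measurable_funTS; apply: measurableT_comp; first exact: measurable_inv.
by apply: measurable_funD => //; exact: measurable_cst.
Qed.

Lemma iabs (f : R -> R) : L1pos f -> mu.-integrable (pos_dom R) (EFin \o (fun t => `|f t|)%R).
Proof.
move=> If; have := integrable_abse If.
by apply: eq_integrable => // t _.
Qed.

Lemma part1 (f : R -> R) : L1pos f ->
  \int[mu]_(t in pos_dom R) (`|f t| * log_weight t)%:E < +oo ->
  L1pos (hardy_op f).
Proof.
move=> If Hw.
have mf : measurable_fun (pos_dom R) (EFin \o f) := measurable_int _ If.
apply/integrableP; split; first by apply/measurable_EFinP; exact: m_hardy.
pose A x := \int[mu]_t (if PA x t then hF f t else 0).
pose B x := \int[mu]_t (if PB x t then hF f t else 0).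
have mA : measurable_fun setT A := @meas_sect PA (hF f) mPA (@mhF f mf) (hF_ge0 f).
have mB : measurable_fun setT B := @meas_sect PB (hF f) mPB (@mhF f mf) (hF_ge0 f).
have A0 x : 0 <= A x by apply: integral_ge0 => t _; case: ifP => // _; exact: hF_ge0.
have B0 x : 0 <= B x by apply: integral_ge0 => t _; case: ifP => // _; exact: hF_ge0.
have mAB : measurable_fun setT (fun x => A x * aA x + B x * aB x).
  by apply: emeasurable_funD; apply: emeasurable_funM => //; [exact: maA | exact: maB].
apply: le_lt_trans Hw; rewrite (core _ mf).
apply: (@le_trans _ _ (\int[mu]_(x in pos_dom R) (A x * aA x + B x * aB x))).
  apply: ge0_le_integral => //.
  - apply: measurableT_comp => //; apply/measurable_EFinP; exact: m_hardy.
  - exact: measurable_funTS.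
  move=> x; rewrite /pos_dom /= in_itv /= andbT => x0.
  have -> : A x = (Rintegral mu `]0%R, x] (fun t => `|f t|))%:E.
    exact: (SA _ _ x0 (iabs _ If)).
  have -> : B x = (Rintegral mu `]x, +oo[ (fun t => `|f t|))%:E.
    exact: (SB _ _ x0 (iabs _ If)).
  rewrite /aA /aB -!EFinM -EFinD /= lee_fin (hardy_eq _ _ x0 If).
  apply: le_trans (ler_normB _ _) _; rewrite !normrM.
  apply: lerD; apply: ler_wpM2r => //.
  - apply: le_normr_Rintegral; first exact: measurable_itv.
    by apply: integrableS If => //; exact: subD_oc.
  - apply: le_normr_Rintegral; first exact: measurable_itv.
    by apply: integrableS If => //; exact: subD_oo.
have ABge0 : forall x, setT x -> 0 <= A x * aA x + B x * aB x.
  by move=> x _; apply: adde_ge0; apply: mule_ge0 => //; [exact: aA_ge0|exact: aB_ge0].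
apply: (le_trans (ge0_subset_integral mu measurable_D measurableT mAB ABge0 (@subsetT _ _))).
rewrite ge0_integralD//.
- by move=> x _; apply: mule_ge0 => //; exact: aA_ge0.
- by apply: emeasurable_funM => //; exact: maA.
- by move=> x _; apply: mule_ge0 => //; exact: aB_ge0.
- by apply: emeasurable_funM => //; exact: maB.
Qed.

Lemma Dpos (t : R) : (0 < t)%R -> pos_dom R t.
Proof. by move=> t0; rewrite /pos_dom /= in_itv /= andbT. Qed.

Lemma part2 (f : R -> R) : L1pos f -> (forall t, pos_dom R t -> (0 <= f t)%R) ->
  L1pos (hardy_op f) ->
  \int[mu]_(t in pos_dom R) (f t * log_weight t)%:E < +oo.
Proof.
move=> If f0 IH.
have mf : measurable_fun (pos_dom R) (EFin \o f) := measurable_int _ If.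
have /integrableP[mH iH] := IH.
have iH' : \int[mu]_(x in pos_dom R) (`|hardy_op f x|)%:E < +oo := iH.
have mH' : measurable_fun (pos_dom R) (fun x => (`|hardy_op f x|)%:E).
  by apply/measurable_EFinP; apply: measurableT_comp => //; apply/measurable_EFinP.
have -> : \int[mu]_(t in pos_dom R) (f t * log_weight t)%:E =
          \int[mu]_(t in pos_dom R) (`|f t| * log_weight t)%:E.
  by apply: eq_integral => t; rewrite inE => Dt; rewrite ger0_norm// f0.
rewrite (core _ mf).
pose A x := \int[mu]_t (if PA x t then hF f t else 0).
pose B x := \int[mu]_t (if PB x t then hF f t else 0).
have mA : measurable_fun setT A := @meas_sect PA (hF f) mPA (@mhF f mf) (hF_ge0 f).
have mB : measurable_fun setT B := @meas_sect PB (hF f) mPB (@mhF f mf) (hF_ge0 f).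
have A0 x : 0 <= A x by apply: integral_ge0 => t _; case: ifP => // _; exact: hF_ge0.
have B0 x : 0 <= B x by apply: integral_ge0 => t _; case: ifP => // _; exact: hF_ge0.
pose C := Rintegral mu (pos_dom R) f.
have C0 : (0 <= C)%R by apply: Rintegral_ge0 => t; exact: f0.
have key x : (0 < x)%R -> exists J1 J2 : R, [/\ A x = J1%:E, B x = J2%:E,
    hardy_op f x = (J1 * (x * (1 + x))^-1 - J2 * (1 + x)^-1)%R, C = (J1 + J2)%R &
    (0 <= J1)%R /\ (0 <= J2)%R].
  move=> x0.
  have E1 : Rintegral mu `]0%R, x] f = Rintegral mu `]0%R, x] (fun t => `|f t|)%R.
    apply: eq_Rintegral => t; rewrite inE /= in_itv /= => /andP[t0 _].
    by rewrite ger0_norm// f0//; exact: Dpos.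
  have E2 : Rintegral mu `]x, +oo[ f = Rintegral mu `]x, +oo[ (fun t => `|f t|)%R.
    apply: eq_Rintegral => t; rewrite inE /= in_itv /= andbT => xt.
    by rewrite ger0_norm// f0//; apply: Dpos; exact: lt_trans xt.
  exists (Rintegral mu `]0%R, x] (fun t => `|f t|)%R),
    (Rintegral mu `]x, +oo[ (fun t => `|f t|)%R); split.
  - exact: (SA _ _ x0 (iabs _ If)).
  - exact: (SB _ _ x0 (iabs _ If)).
  - by rewrite (hardy_eq _ _ x0 If) E1 E2.
  - by rewrite /C (Rsplit _ _ x0 If) E1 E2.
  - by split; apply: Rintegral_ge0.
have Aout x : (x <= 0)%R -> A x = 0.
  move=> x0; rewrite /A (_ : (fun t => _) = cst 0) ?integral0//.
  apply/funext => t; rewrite /PA; case: ifP => // /andP[t0 tx].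
  by have := lt_le_trans t0 (le_trans tx x0); rewrite ltxx.
have Bout x : (x <= 0)%R -> B x = 0.
  move=> x0; rewrite /B (_ : (fun t => _) = cst 0) ?integral0//.
  apply/funext => t; rewrite /PB; case: ifP => // /andP[x0' _].
  by have := lt_le_trans x0' x0; rewrite ltxx.
have hA : \int[mu]_x (A x * aA x) < +oo.
  pose P1 := (fun y : R => (`|hardy_op f y|)%:E + C%:E) \_ (`]0%R, 1%R]%classic : set R).
  pose P2 x := C%:E * (if PA x 1 then aA x else 0).
  have mP1' : measurable_fun (`]0%R, 1%R]%classic : set R) (fun y : R => (`|hardy_op f y|)%:E + C%:E).
    apply: emeasurable_funD => //.
    by apply: measurable_funS mH' => //; exact: subD_oc.
  have mP1 : measurable_fun setT P1.
    exact: (measurable_restrictT _ (measurable_itv _)).1 mP1'.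
  have mPA1 : measurable_fun setT (fun x => PA x 1).
    exact: (measurable_fun_pair1 (1%R : R) mPA).
  have mI1 : measurable_fun setT (fun x => if PA x 1 then aA x else 0).
    apply: (@measurable_fun_ifT _ _ _ _ aA (fun _ => 0) (fun x => PA x 1)) => //.
    exact: maA.
  have mP2 : measurable_fun setT P2.
    by apply: emeasurable_funM => //.
  have I10 x : 0 <= (if PA x 1 then aA x else 0) by case: ifP => // _; exact: aA_ge0.
  have P10 x : 0 <= P1 x.
    by rewrite /P1 /patch; case: ifP => // _; apply: adde_ge0; rewrite lee_fin.
  have P20 x : 0 <= P2 x by apply: mule_ge0; rewrite ?lee_fin.
  apply: (@le_lt_trans _ _ (\int[mu]_x (P1 x + P2 x))).
    apply: ge0_le_integral => //.
    - by move=> x _; apply: mule_ge0 => //; exact: aA_ge0.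
    - by apply: emeasurable_funM => //; exact: maA.
    - by apply: emeasurable_funD.
    move=> x _.
    have [x0|x0] := leP x 0%R.
      by rewrite Aout// mul0e; apply: adde_ge0.
    have [J1 [J2 [-> _ HE HC [J10 J20]]]] := key x x0.
    have a0 : (0 < (x * (1 + x))^-1)%R by rewrite invr_gt0 mulr_gt0//; lra.
    have b0 : (0 < (1 + x)^-1)%R by rewrite invr_gt0; lra.
    rewrite /P1 /patch mem_setE in_itv /= x0 /= /aA (ger0_norm (ltW a0)).
    have [x1|x1] := leP x 1%R.
      apply: le_trans (leeDl _ (P20 x)).
      rewrite -EFinM -EFinD lee_fin HE HC.
      have b1 : ((1 + x)^-1 <= 1)%R by rewrite invf_le1; lra.
      have : (J2 * (1 + x)^-1 <= J2)%R by rewrite -[leRHS]mulr1 ler_wpM2l.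
      move: (J1 * _)%R (J2 * _)%R => u v.
      by have := normb (u - v)%R => /andP[? ?]; lra.
    rewrite (_ : point = 0)// add0e /P2 /PA ltr01 /= (ltW x1) /aA (ger0_norm (ltW a0)).
    rewrite -EFinM lee_fin.
    by rewrite ler_wpM2r ?(ltW a0)// HC; lra.
  rewrite ge0_integralD//.
  apply: lte_add_pinfty.
    rewrite /P1 -integral_mkcond ge0_integralD//; last first.
      by apply: measurable_funS mH' => //; exact: subD_oc.
    apply: lte_add_pinfty.
      apply: le_lt_trans iH'.
      apply: ge0_subset_integral => //; exact: subD_oc.
    rewrite integral_cst//.
    have HL := @lebesgue_measure_itv R `]0%R, 1%R]; rewrite /= lte01 in HL.
    rewrite [X in _ * X](_ : _ = 1%:E); first by rewrite -EFinM ltry.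
    by move: HL; rewrite oppr0 adde0; apply.
  rewrite /P2 ge0_integralZl//.
  by rewrite IA_eq ?ltr01// -EFinM ltry.
have hB : \int[mu]_x (B x * aB x) < +oo.
  pose G x := A x * aA x + ((fun y => (`|hardy_op f y|)%:E) \_ (pos_dom R)) x.
  have mP : measurable_fun setT ((fun y => (`|hardy_op f y|)%:E) \_ (pos_dom R)).
    exact: (measurable_restrictT _ measurable_D).1 mH'.
  have mG : measurable_fun setT G.
    by apply: emeasurable_funD => //; apply: emeasurable_funM => //; exact: maA.
  have P0 x : 0 <= ((fun y => (`|hardy_op f y|)%:E) \_ (pos_dom R)) x.
    by rewrite /patch; case: ifP.
  apply: (@le_lt_trans _ _ (\int[mu]_x G x)).
    apply: ge0_le_integral => //.
    - by move=> x _; apply: mule_ge0 => //; exact: aB_ge0.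
    - by apply: emeasurable_funM => //; exact: maB.
    move=> x _; rewrite /G.
    have [x0|x0] := leP x 0%R.
      by rewrite Bout// mul0e; apply: adde_ge0 => //; apply: mule_ge0 => //; exact: aA_ge0.
    have [J1 [J2 [-> -> HE _ [J10 J20]]]] := key x x0.
    rewrite /patch memD x0 /aA /aB -!EFinM -EFinD lee_fin HE.
    have a0 : (0 < (x * (1 + x))^-1)%R by rewrite invr_gt0 mulr_gt0//; lra.
    have b0 : (0 < (1 + x)^-1)%R by rewrite invr_gt0; lra.
    rewrite (ger0_norm (ltW a0)) (ger0_norm (ltW b0)).
    move: (J1 * _)%R (J2 * _)%R => u v.
    by have := normb (u - v)%R => /andP[? ?]; lra.
  rewrite ge0_integralD//; last 2 first.
  - by move=> x _; apply: mule_ge0 => //; exact: aA_ge0.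
  - by apply: emeasurable_funM => //; exact: maA.
  apply: lte_add_pinfty => //.
  by rewrite -integral_mkcond.
exact: lte_add_pinfty.
Qed.

End aux.

Theorem theorem2p3 (R : realType) :
  (forall f : R -> R, L1pos f ->
     (\int[@lebesgue_measure R]_(t in pos_dom R) (`|f t| * log_weight t)%:E < +oo)%E ->
     L1pos (hardy_op f)) /\
  (forall f : R -> R, L1pos f -> (forall t, pos_dom R t -> 0 <= f t) ->
     L1pos (hardy_op f) ->
     (\int[@lebesgue_measure R]_(t in pos_dom R) (f t * log_weight t)%:E < +oo)%E).
Proof.
split; [exact: part1 | exact: part2].
Qed.
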